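(* Let $f:\mathbb{R}^{d_0}\to\mathbb{R}$ be an $L$-layer ReLU network with weights $W^{(i)}\in\mathbb{R}^{d_i\times d_{i-1}}$ and biases $b^{(i)}\in\mathbb{R}^{d_i}$ ($1\le i\le L$, $d_L=1$), defined by $\hat z^{(0)}(x)=x$, $z^{(i)}(x)=W^{(i)}\hat z^{(i-1)}(x)+b^{(i)}$, $\hat z^{(i)}(x)=\mathrm{ReLU}(z^{(i)}(x))$, $f(x)=z^{(L)}(x)$. Let $\mathcal{C}\subseteq\mathbb{R}^{d_0}$ be an input set, let $\mathcal{Z}$ be a set of neuron split constraints given by disjoint index sets $\mathcal{Z}^{+(i)},\mathcal{Z}^{-(i)}\subseteq\{1,\dots,d_i\}$ ($1\le i\le L-1$), and let $l^{(i)}\le z^{(i)}(x)\le u^{(i)}$ be pre-ReLU bounds ($1\le i\le L$) valid for all $x\in\mathcal{C}$ whose pre-activations satisfy the split constraints. Fix any free parameters $\alpha^{(i)}_j\in[0,1]$. Then $$\min_{x\in\mathcal{C},\,z\in\mathcal{Z}} f(x)\;\ge\;\max_{\beta\ge 0}\;\min_{x\in\mathcal{C}}\;(a+P\beta)^\top x+q^\top\beta+c,$$ where $\beta=[\beta^{(1)\top}\ \cdots\ \beta^{(L-1)\top}]^\top$ with $\beta^{(i)}\in\mathbb{R}^{d_i}$, and the quantities $a\in\mathbb{R}^{d_0}$, $P\in\mathbb{R}^{d_0\times\sum_{i=1}^{L-1}d_i}$, $q\in\mathbb{R}^{\sum_{i=1}^{L-1}d_i}$, $c\in\mathbb{R}$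 (which depend on $W^{(i)},b^{(i)},l^{(i)},u^{(i)}$, on $\alpha$ and, through the matrices $D^{(i)}$ and vectors $\underline{b}^{(i)}$ below, on $\beta$) are defined as follows: $$a=\big[\Omega(L,1)W^{(1)}\big]^\top,\qquad P=[P_1^\top\ \cdots\ P_{L-1}^\top],\quad P_i=S^{(i)}\Omega(i,1)W^{(1)}\in\mathbb{R}^{d_i\times d_0},$$ $$q=[q_1^\top\ \cdots\ q_{L-1}^\top]^\top,\quad q_i=\sum_{k=1}^{i}S^{(i)}\Omega(i,k)b^{(k)}+\sum_{k=2}^{i}S^{(i)}\Omega(i,k)W^{(k)}\underline{b}^{(k-1)},$$ $$c=\sum_{i=1}^{L}\Omega(L,i)b^{(i)}+\sum_{i=2}^{L}\Omega(L,i)W^{(i)}\underline{b}^{(i-1)}.$$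
   Context: Split constraints: $z\in\mathcal{Z}$ means $z^{(i)}_j\ge 0$ for all $j\in\mathcal{Z}^{+(i)}$ and $z^{(i)}_j<0$ for all $j\in\mathcal{Z}^{-(i)}$; the left-hand minimum is over $x\in\mathcal{C}$ whose pre-activation vector $z=(z^{(1)}(x),\dots,z^{(L-1)}(x))$ lies in $\mathcal{Z}$. $S^{(i)}\in\mathbb{R}^{d_i\times d_i}$ is diagonal with $S^{(i)}_{j,j}=-1$ if $j\in\mathcal{Z}^{+(i)}$, $+1$ if $j\in\mathcal{Z}^{-(i)}$, and $0$ otherwise. For $1\le i\le k\le L$, $\Omega(i,i)=I$ and $\Omega(k+1,i)=W^{(k+1)}D^{(k)}\Omega(k,i)$. The row vectors $A^{(i)}\in\mathbb{R}^{1\times d_i}$ are defined by $A^{(L-1)}=W^{(L)}$ and $A^{(i)}=(A^{(i+1)}D^{(i+1)}+\beta^{(i+1)\top}S^{(i+1)})W^{(i+1)}$ for $0\le i\le L-2$. For $1\le i\le L-1$, $D^{(i)}$ is diagonal with $D^{(i)}_{j,j}=1$ if $l^{(i)}_j\ge0$ or $j\in\mathcal{Z}^{+(i)}$; $0$ if $u^{(i)}_j\le 0$ or $j\in\mathcal{Z}^{-(i)}$; $\alpha^{(i)}_j$ if $u^{(i)}_j>0>l^{(i)}_j$, $j\notin\mathcal{Z}^{+(i)}\cup\mathcal{Z}^{-(i)}$ and $A^{(i)}_{1,j}\ge 0$; and $\frac{u^{(i)}_j}{u^{(i)}_j-l^{(i)}_j}$ if $u^{(i)}_j>0>l^{(i)}_j$,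 $j\notin\mathcal{Z}^{+(i)}\cup\mathcal{Z}^{-(i)}$ and $A^{(i)}_{1,j}<0$. The vector $\underline{b}^{(i)}$ has $\underline{b}^{(i)}_j=-\frac{u^{(i)}_jl^{(i)}_j}{u^{(i)}_j-l^{(i)}_j}$ if $u^{(i)}_j>0>l^{(i)}_j$, $j\notin\mathcal{Z}^{+(i)}\cup\mathcal{Z}^{-(i)}$ and $A^{(i)}_{1,j}<0$, and $\underline{b}^{(i)}_j=0$ otherwise. (These are computed top-down: $A^{(L-1)}$, then $D^{(L-1)},\underline{b}^{(L-1)}$, then $A^{(L-2)}$, etc.) *)

(* Defs.v *)
From HB Require Import structures.
From mathcomp Require Import all_boot all_order all_algebra.
From mathcomp Require Import classical_sets reals constructive_ereal ereal.
Set Implicit Arguments. Unset Strict Implicit. Unset Printing Implicit Defensive.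
Import Order.TTheory GRing.Theory Num.Theory.
Local Open Scope ring_scope.

Section ReluNet.
Variable R : realType.
Variable d : nat -> nat.
Variable L : nat.
(* W i : d_i x d_{i-1} weights, b i : d_i biases (meaningful for 1 <= i <= L) *)
Variable W : forall i, 'M[R]_(d i, d i.-1).
Variable b : forall i, 'cV[R]_(d i).
Variable l u : forall i, 'cV[R]_(d i).
Variable Zp Zn : forall i, {set 'I_(d i)}.
Variable alpha : forall i, 'cV[R]_(d i).

Definition relu (r : R) : R := Num.max r 0.

Fixpoint zhat (i : nat) (x : 'cV[R]_(d 0)) {struct i} : 'cV[R]_(d i) :=
  match i as i0 return 'cV[R]_(d i0) with
  | 0 => x
  | i'.+1 => map_mx relu (W i'.+1 *m zhat i' x + b i'.+1)
  end.

(* z^{(i)}(x), for i >= 1 (the value at i = 0 is irrelevant) *)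
Definition zpre (i : nat) (x : 'cV[R]_(d 0)) : 'cV[R]_(d i) :=
  match i as i0 return 'cV[R]_(d i0) with
  | 0 => x
  | i'.+1 => W i'.+1 *m zhat i' x + b i'.+1
  end.

Definition sc (M : 'M[R]_1) : R := M ord0 ord0.

(* the network output f(x) = z^{(L)}(x) in R^{d_L} = R^1 (d_L = 1 is assumed
   in the theorem; conform_mx is the identity cast when the sizes agree) *)
Definition fnet (x : 'cV[R]_(d 0)) : R := sc (conform_mx 0 (zpre L x)).

Definition in_splits (x : 'cV[R]_(d 0)) : Prop :=
  forall i, (1 <= i <= L.-1)%N ->
    (forall j, j \in Zp i -> 0 <= zpre i x j ord0) /\
    (forall j, j \in Zn i -> zpre i x j ord0 < 0).

Definition Smx (i : nat) : 'M[R]_(d i) :=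
  diag_mx (\row_j (if j \in Zp i then -1 else if j \in Zn i then 1 else 0)).

Definition unstable (i : nat) (j : 'I_(d i)) : bool :=
  [&& 0 < u i j ord0, l i j ord0 < 0, j \notin Zp i & j \notin Zn i].

(* D^{(i)} as a function of A^{(i)} *)
Definition Dof (i : nat) (A : 'rV[R]_(d i)) : 'M[R]_(d i) :=
  diag_mx (\row_j
    (if (0 <= l i j ord0) || (j \in Zp i) then 1
     else if (u i j ord0 <= 0) || (j \in Zn i) then 0
     else if 0 <= A ord0 j then alpha i j ord0
     else u i j ord0 / (u i j ord0 - l i j ord0))).

(* underline b^{(i)} as a function of A^{(i)} *)
Definition blof (i : nat) (A : 'rV[R]_(d i)) : 'cV[R]_(d i) :=
  \col_j (if unstable j && (A ord0 j < 0)
          then - (u i j ord0 * l i j ord0) / (u i j ord0 - l i j ord0)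
          else 0).

Section WithBeta.
(* beta^{(i)}, meaningful for 1 <= i <= L-1 *)
Variable beta : forall i, 'cV[R]_(d i).

(* A^{(i)} computed top-down: Arec n i is A^{(i)} when n = L-1-i *)
Fixpoint Arec (n i : nat) {struct n} : 'rV[R]_(d i) :=
  match n with
  | 0 => conform_mx 0 (W L)
  | n'.+1 =>
      let A' := Arec n' i.+1 in
      (A' *m Dof A' + (beta i.+1)^T *m Smx i.+1) *m W i.+1
  end.

Definition Amx (i : nat) : 'rV[R]_(d i) := Arec (L.-1 - i) i.
Definition Dmx (i : nat) : 'M[R]_(d i) := Dof (Amx i).
Definition blmx (i : nat) : 'cV[R]_(d i) := blof (Amx i).

(* Omega(k, i) : d_k x d_i, for 1 <= i <= k <= L *)
Fixpoint Omega (k i : nat) {struct k} : 'M[R]_(d k, d i) :=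
  match k as k0 return 'M[R]_(d k0, d i) with
  | 0 => conform_mx 0 (1%:M : 'M[R]_(d i))
  | k'.+1 => if i == k'.+1 then conform_mx 0 (1%:M : 'M[R]_(d i))
             else W k'.+1 *m Dmx k' *m Omega k' i
  end.

Definition avec : 'cV[R]_(d 0) :=
  (conform_mx 0 (Omega L 1 *m W 1) : 'rV[R]_(d 0))^T.

Definition Pblk (i : nat) : 'M[R]_(d i, d 0) := Smx i *m Omega i 1 *m W 1.

Definition qblk (i : nat) : 'cV[R]_(d i) :=
  \sum_(1 <= k < i.+1) Smx i *m Omega i k *m b k
  + \sum_(2 <= k < i.+1) Smx i *m Omega i k *m W k *m blmx k.-1.

Definition cconst : R :=
  sc (conform_mx 0 (\sum_(1 <= i < L.+1) Omega L i *m b i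
                    + \sum_(2 <= i < L.+1) Omega L i *m W i *m blmx i.-1)).

(* P beta = sum_i P_i^T beta^{(i)} (block product) *)
Definition Pbeta : 'cV[R]_(d 0) := \sum_(1 <= i < L) (Pblk i)^T *m beta i.

(* q^T beta = sum_i q_i^T beta^{(i)} (block product) *)
Definition qbeta : R := \sum_(1 <= i < L) sc ((qblk i)^T *m beta i).

Definition objective (x : 'cV[R]_(d 0)) : R :=
  sc ((avec + Pbeta)^T *m x) + qbeta + cconst.

End WithBeta.
End ReluNet.

(* Main.v *)
Require Import Defs.
From HB Require Import structures.
From mathcomp Require Import all_boot all_order all_algebra.
From mathcomp Require Import classical_sets reals constructive_ereal ereal.
From mathcomp Require Import ring lra.
Import Order.TTheory GRing.Theory Num.Theory.
Local Open Scope ring_scope.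

Lemma neuron (R : realType) (A z lo up al : R) (p n : bool) :
  lo <= z <= up -> (p -> 0 <= z) -> (n -> z < 0) -> 0 <= al <= 1 ->
  0 <= A * (relu z
     - (if (0 <= lo) || p then 1
        else if (up <= 0) || n then 0
        else if 0 <= A then al else up / (up - lo)) * z
     - (if [&& 0 < up, lo < 0, ~~ p & ~~ n] && (A < 0)
        then - (up * lo) / (up - lo) else 0)).
Proof.
move=> /andP[hl hu] hp hn /andP[ha0 ha1].
rewrite /relu.
have [h1|h1] := boolP ((0 <= lo) || p).
  have z0 : 0 <= z by case/orP: h1 => [h|/hp //]; exact: le_trans hl.
  have -> : [&& 0 < up, lo < 0, ~~ p & ~~ n] = false.
    by case/orP: h1 => [h|->]; rewrite ?andbF //= (ltNge lo) h /= andbF.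
  by rewrite max_l //= mul1r subrr subr0 mulr0.
have lo0 : lo < 0 by move: h1; rewrite negb_or -ltNge => /andP[].
have np : ~~ p by move: h1; rewrite negb_or => /andP[].
have [h2|h2] := boolP ((up <= 0) || n).
  have z0 : z <= 0.
    by case/orP: h2 => [h|/hn/ltW //]; exact: le_trans hu h.
  have -> : [&& 0 < up, lo < 0, ~~ p & ~~ n] = false.
    by case/orP: h2 => [h|->]; rewrite ?andbF //= (ltNge 0 up) h.
  by rewrite max_r // mul0r !subr0 mulr0.
have up0 : 0 < up by move: h2; rewrite negb_or -ltNge => /andP[].
have nn : ~~ n by move: h2; rewrite negb_or => /andP[].
rewrite up0 lo0 np nn /=.
have [hA|hA] := boolP (0 <= A).
  rewrite ltNge hA /= subr0.
  apply: mulr_ge0 => //.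
  have [zp|zn] := leP 0 z.
    nra.
  nra.
rewrite -ltNge in hA; rewrite hA.
have ul : 0 < up - lo by lra.
rewrite -(opprK A) mulNr oppr_ge0.
apply: mulr_ge0_le0; first lra.
suff : (Num.max z 0) <= up * (z - lo) / (up - lo).
  move=> h.
  have e : up / (up - lo) * z + - (up * lo) / (up - lo) = up * (z - lo) / (up - lo).
    by field; lra.
  by rewrite -addrA -opprD e subr_le0.
rewrite ler_pdivlMr //.
have [zp|zn] := leP 0 z.
  nra.
nra.
Qed.

Lemma beta_neg (R : realType) (be z : R) (p n : bool) :
  0 <= be -> (p -> 0 <= z) -> (n -> z < 0) ->
  be * ((if p then -1 else if n then 1 else 0) * z) <= 0.
Proof.
move=> hb hp hn; case: p hp => [/(_ isT) hz|_].
  by rewrite mulN1r mulrN oppr_le0 mulr_ge0.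
case: n hn => [/(_ isT) hz|_]; last by rewrite mul0r mulr0.
by rewrite mul1r mulr_ge0_le0 // ltW.
Qed.

Lemma scD (R : realType) (A B : 'M[R]_1) : sc (A + B) = sc A + sc B.
Proof. by rewrite /sc mxE. Qed.
Lemma scB (R : realType) (A B : 'M[R]_1) : sc (A - B) = sc A - sc B.
Proof. by rewrite /sc !mxE. Qed.
Lemma sc_sum (R : realType) (I : Type) (r : seq I) (P : pred I) (F : I -> 'M[R]_1) :
  sc (\sum_(i <- r | P i) F i) = \sum_(i <- r | P i) sc (F i).
Proof. by rewrite /sc summxE. Qed.
Lemma scN (R : realType) (A : 'M[R]_1) : sc (- A) = - sc A.
Proof. by rewrite /sc mxE. Qed.
Lemma sc_tr (R : realType) (A : 'M[R]_1) : sc A^T = sc A.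
Proof. by rewrite /sc mxE. Qed.
Lemma sc_mul (R : realType) n (A : 'rV[R]_n) (v : 'cV[R]_n) :
  sc (A *m v) = \sum_j A ord0 j * v j ord0.
Proof. by rewrite /sc mxE. Qed.

Lemma sc_trmul (R : realType) n (X y : 'cV[R]_n) : sc (X^T *m y) = sc (y^T *m X).
Proof. by rewrite -sc_tr trmx_mul trmxK. Qed.
Lemma sc_trmul2 (R : realType) n (y : 'cV[R]_n) (A : 'rV[R]_n) :
  sc (y^T *m A^T) = sc (A *m y).
Proof. by rewrite -sc_tr trmx_mul !trmxK. Qed.
Lemma sc_tr3 (R : realType) m n (y : 'cV[R]_n) (P : 'M[R]_(m, n)) (c : 'cV[R]_m) :
  sc (y^T *m (P^T *m c)) = sc (c^T *m (P *m y)).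
Proof. by rewrite -sc_tr !trmx_mul !trmxK mulmxA. Qed.
Lemma sc_row (R : realType) m (N : 'cV[R]_m) i : sc (row i N) = N i 0.
Proof. by rewrite /sc mxE. Qed.
Lemma mxaddE (R : realType) m n (A B : 'M[R]_(m, n)) i j : (A + B) i j = A i j + B i j.
Proof. by rewrite mxE. Qed.

Lemma eq_helper (R : realType) n m (A : 'rV[R]_n) (D : 'M[R]_n) (Bt : 'rV[R]_n)
  (S : 'M[R]_n) (Wm : 'M[R]_(n, m)) (zh xk : 'cV[R]_m) (bb bl r : 'cV[R]_n) :
  sc (A *m (r - (D *m (Wm *m xk + bb) + bl)))
   - sc (Bt *m (S *m (Wm *m xk + bb)))
   - sc ((A *m D + Bt *m S) *m ((Wm *m zh + bb) - (Wm *m xk + bb)))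
   = sc (A *m (r - D *m (Wm *m zh + bb) - bl))
   - sc (Bt *m (S *m (Wm *m zh + bb))).
Proof.
rewrite ?mulmxBr ?mulmxDr ?mulmxDl ?mulmxBr ?mulmxA.
rewrite ?scB ?scD ?scN ?scB ?scD; lra.
Qed.

Lemma mxoppE (R : realType) m n (A : 'M[R]_(m, n)) i j : (- A) i j = - A i j.
Proof. by rewrite mxE. Qed.

Section Core.
Variables (R : realType) (d : nat -> nat) (L' : nat).
Variables (W : forall i, 'M[R]_(d i, d i.-1)).
Variables (b l u alpha beta : forall i, 'cV[R]_(d i)).
Variables (Zp Zn : forall i, {set 'I_(d i)}).
Variable (x : 'cV[R]_(d 0)).
Local Notation L := L'.+1.
Local Notation Om := (Omega L W l u Zp Zn alpha beta).
Local Notation Dm := (Dmx L W l u Zp Zn alpha beta).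
Local Notation Bl := (blmx L W l u Zp Zn alpha beta).
Local Notation Am := (Amx L W l u Zp Zn alpha beta).
Local Notation S := (Smx R Zp Zn).

Fixpoint xi k : 'cV[R]_(d k) :=
  match k return 'cV[R]_(d k) with
  | 0 => x
  | k'.+1 => Dm k'.+1 *m (W k'.+1 *m xi k' + b k'.+1) + Bl k'.+1
  end.
Definition zeta k : 'cV[R]_(d k) :=
  match k return 'cV[R]_(d k) with
  | 0 => x
  | k'.+1 => W k'.+1 *m xi k' + b k'.+1
  end.

Lemma Om_id k : Om k k = 1%:M.
Proof. by case: k => [|k] /=; rewrite ?eqxx conform_mx_id. Qed.

Lemma OmS k i : i != k.+1 -> Om k.+1 i = W k.+1 *m Dm k *m Om k i.
Proof. by move=> h /=; rewrite (negbTE h). Qed.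

Lemma zeta_closed k : (1 <= k)%N -> zeta k = Om k 1 *m W 1 *m x
  + \sum_(1 <= i < k.+1) Om k i *m b i
  + \sum_(2 <= i < k.+1) Om k i *m W i *m Bl i.-1.
Proof.
elim: k => [//|k IH] _.
case: k IH => [|k] IH.
  by rewrite big_nat1 Om_id !mul1mx big_geq // addr0.
have ez : zeta k.+2 = W k.+2 *m (Dm k.+1 *m zeta k.+1 + Bl k.+1) + b k.+2 by [].
rewrite ez IH // [in RHS]big_nat_recr // [in RHS](big_nat_recr k.+2) //.
rewrite !Om_id !mul1mx (@OmS k.+1 1) //.
have e1 : \sum_(1 <= i < k.+2) Om k.+2 i *m b i
    = W k.+2 *m Dm k.+1 *m \sum_(1 <= i < k.+2) Om k.+1 i *m b i.
  rewrite mulmx_sumr; apply: eq_big_nat => i /andP[_ hi].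
  by rewrite OmS ?mulmxA // neq_ltn hi.
have e2 : \sum_(2 <= i < k.+2) Om k.+2 i *m W i *m Bl i.-1
    = W k.+2 *m Dm k.+1 *m \sum_(2 <= i < k.+2) Om k.+1 i *m W i *m Bl i.-1.
  rewrite mulmx_sumr; apply: eq_big_nat => i /andP[_ hi].
  by rewrite OmS ?mulmxA // neq_ltn hi.
rewrite e1 e2 /= !mulmxDr !mulmxA -!addrA; congr (_ + _).
congr (_ + _); by rewrite addrA addrC.
Qed.

Variable e : d L = 1%N.
Let j0 : 'I_(d L) := cast_ord (esym e) ord0.

Lemma conf_row n (M : 'M[R]_(d L, n)) : conform_mx (0 : 'M[R]_(1, n)) M = row j0 M.
Proof.
rewrite -(conform_castmx (e, erefl n)) conform_mx_id.
apply/matrixP => i j; rewrite castmxE !mxE ord1 /=.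
by congr (M _ _); apply: val_inj.
Qed.

Lemma obj_eq : objective L W b l u Zp Zn alpha beta x
  = zeta L j0 0 + \sum_(1 <= i < L) sc ((beta i)^T *m (S i *m zeta i)).
Proof.
rewrite /objective /avec /Pbeta /qbeta /cconst !conf_row.
rewrite sc_trmul mulmxDr scD sc_trmul2 -row_mul sc_row mulmx_sumr sc_sum.
rewrite (eq_big_nat _ _ (F2 := fun i => sc ((beta i)^T *m (Pblk L W l u Zp Zn alpha beta i *m x))));
  last by move=> i _; rewrite sc_tr3.
rewrite [\sum_(1 <= i < L) sc ((qblk _ _ _ _ _ _ _ _ _ _)^T *m _)](eq_big_nat _ _
   (F2 := fun i => sc ((beta i)^T *m qblk L W b l u Zp Zn alpha beta i)));
  last by move=> i _; rewrite sc_trmul.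
rewrite sc_row zeta_closed // !mxaddE.
have -> : \sum_(1 <= i < L) sc ((beta i)^T *m (S i *m zeta i)) =
  \sum_(1 <= i < L) sc ((beta i)^T *m (Pblk L W l u Zp Zn alpha beta i *m x))
  + \sum_(1 <= i < L) sc ((beta i)^T *m qblk L W b l u Zp Zn alpha beta i).
  rewrite -big_split; apply: eq_big_nat => i /andP[hi _] /=.
  rewrite zeta_closed // /Pblk /qblk -scD -mulmxDr; congr (sc (_ *m _)).
  have E1 : forall k, S i *m (Om i k *m b k) = S i *m Om i k *m b k.
    by move=> k; rewrite mulmxA.
  have E2 : forall k, S i *m (Om i k *m W k *m Bl k.-1) = S i *m Om i k *m W k *m Bl k.-1.
    by move=> k; rewrite !mulmxA.
  rewrite !mulmxDr !mulmx_sumr !mulmxA (eq_bigr _ (fun k _ => E1 k)).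
  by rewrite (eq_bigr _ (fun k _ => E2 k)) addrA.
lra.
Qed.


Hypothesis hsplit : in_splits L W b Zp Zn x.
Hypothesis hbnd : forall i, (1 <= i <= L)%N -> forall j,
  l i j ord0 <= zpre W b i x j ord0 <= u i j ord0.
Hypothesis halpha : forall i, (1 <= i <= L.-1)%N -> forall j, 0 <= alpha i j ord0 <= 1.
Hypothesis hbeta : forall i, (1 <= i <= L.-1)%N -> forall j, 0 <= beta i j ord0.

Lemma Am_rec k : (k < L')%N ->
  Am k = (Am k.+1 *m Dm k.+1 + (beta k.+1)^T *m S k.+1) *m W k.+1.
Proof. by move=> h; rewrite /Amx /= -(subnSK h). Qed.

Definition Phi k := sc (Am k *m (zhat W b k x - xi k))
  - \sum_(1 <= m < k.+1) sc ((beta m)^T *m (S m *m zeta m)).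

Lemma step k : (k < L')%N -> Phi k <= Phi k.+1.
Proof.
move=> h; rewrite /Phi (big_nat_recr k.+1) //. rewrite (Am_rec k h).
set A := Am k.+1. set D := Dm k.+1.
set z := W k.+1 *m zhat W b k x + b k.+1.
have ez : zhat W b k.+1 x = map_mx (@relu R) z by [].
have exi : xi k.+1 = D *m zeta k.+1 + Bl k.+1 by [].
have key : W k.+1 *m (zhat W b k x - xi k) = z - zeta k.+1.
  by rewrite mulmxBr /z /zeta opprD addrACA subrr addr0.
rewrite -mulmxA key ez exi.
have ineq1 : 0 <= sc (A *m (map_mx (@relu R) z - D *m z - Bl k.+1)).
  rewrite sc_mul; apply: sumr_ge0 => j _.
  rewrite /D /Dmx /Dof mul_diag_mx /blmx /blof !mxE /unstable.
  have hk : (1 <= k.+1 <= L)%N by rewrite /= ltnS ltnW.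
  have hk' : (1 <= k.+1 <= L.-1)%N by [].
  have [hp hn] := hsplit k.+1 hk'.
  apply: neuron.
  - by have := hbnd k.+1 hk j; rewrite /= !mxE.
  - by move=> /hp; rewrite /= !mxE.
  - by move=> /hn; rewrite /= !mxE.
  - exact: halpha k.+1 hk' j.
have ineq2 : sc ((beta k.+1)^T *m (S k.+1 *m z)) <= 0.
  rewrite sc_mul; apply: sumr_le0 => j _.
  rewrite /Smx mul_diag_mx !mxE.
  have hk' : (1 <= k.+1 <= L.-1)%N by [].
  have [hp hn] := hsplit k.+1 hk'.
  apply: beta_neg.
  - exact: hbeta k.+1 hk' j.
  - by move=> /hp; rewrite /= !mxE.
  - by move=> /hn; rewrite /= !mxE.
have := @eq_helper R _ _ A D (beta k.+1)^T (S k.+1) (W k.+1) (zhat W b k x) (xi k)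
  (b k.+1) (Bl k.+1) (map_mx (@relu R) z).
rewrite -/z -[W k.+1 *m xi k + b k.+1]/(zeta k.+1) => eq.
move: eq ineq1 ineq2.
set s1 := \sum_(1 <= m < k.+1) _.
set t1 := sc (A *m _). set t2 := sc (A *m _). set t3 := sc (_ *m (S k.+1 *m zeta k.+1)).
set t4 := sc (_ *m (_ - zeta k.+1)).
set t5 := sc (_ *m (S k.+1 *m z)).
rewrite [Algebra.Algebra_add__canonical__Monoid_Law R s1 t3]/=.
lra.
Qed.

Lemma Phi_ge0 k : (k <= L')%N -> 0 <= Phi k.
Proof.
elim: k => [_|k IH h].
  rewrite /Phi big_geq //.
  have -> : zhat W b 0 x - xi 0 = 0 by rewrite subrr.
  by rewrite mulmx0 /sc mxE subr0.
exact: le_trans (IH (ltnW h)) (step k h).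
Qed.

Lemma final : objective L W b l u Zp Zn alpha beta x <= fnet L W b x.
Proof.
rewrite obj_eq.
have := Phi_ge0 L' (leqnn L').
rewrite /Phi /Amx /= subnn /= conf_row -row_mul sc_row.
rewrite /fnet conf_row sc_row.
have -> : zpre W b L x = W L *m zhat W b L' x + b L by [].
rewrite mulmxBr !mxaddE mxoppE.
set s1 := \sum_(1 <= m < L) _.
lra.
Qed.

End Core.

Theorem theorem1 (R : realType) (d : nat -> nat) (L : nat)
  (W : forall i, 'M[R]_(d i, d i.-1)) (b : forall i, 'cV[R]_(d i))
  (C : set 'cV[R]_(d 0))
  (Zp Zn : forall i, {set 'I_(d i)})
  (l u : forall i, 'cV[R]_(d i))
  (alpha : forall i, 'cV[R]_(d i)) :
  (1 <= L)%N ->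
  d L = 1%N ->
  (forall i, (1 <= i <= L.-1)%N -> [disjoint Zp i & Zn i]) ->
  (forall x, C x -> in_splits L W b Zp Zn x ->
     forall i, (1 <= i <= L)%N -> forall j,
       l i j ord0 <= zpre W b i x j ord0 <= u i j ord0) ->
  (forall i, (1 <= i <= L.-1)%N -> forall j, 0 <= alpha i j ord0 <= 1) ->
  (ereal_sup [set ereal_inf [set (objective L W b l u Zp Zn alpha beta x)%:E
                             | x in C]%classic
             | beta in [set beta : forall i, 'cV[R]_(d i) |
                         forall i, (1 <= i <= L.-1)%N ->
                           forall j, (0 <= beta i j ord0)%R]%classic]%classic
   <= ereal_inf [set (fnet L W b x)%:E
                 | x in [set x | C x /\ in_splits L W b Zp Zn x]%classic]%classic)%E.
Proof.
move=> hL e _ hbnd halpha.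
case: L hL e hbnd halpha => [//|L'] _ e hbnd halpha.
apply: ge_ereal_sup => _ [beta hbeta <-].
apply/ereal_infP => _ [x [hC hs] <-].
apply: ge_ereal_inf; exists (objective L'.+1 W b l u Zp Zn alpha beta x)%:E.
  by exists x.
rewrite lee_fin; exact: (@final R d L' W b l u alpha beta Zp Zn x e hs (hbnd x hC hs) halpha hbeta).
Qed.
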